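(* Let $k\ge s\ge r\ge 1$ be fixed integers and let $H$ be a fixed $s$-uniform hypergraph with $k$ vertices and $m\ge 1$ edges. Then for every strategy $\mathcal S$ and every $t=t(n)=o\!\left(n^{\,r-(k-s+r)/m}\right)$, a.a.s. $G^{(r,s)}_t$ does not contain a copy of $H$. Consequently $\tau^{(r)}(H)\ge n^{\,r-(k-s+r)/m}$.
   Context: Semi-random hypergraph process: fix integers $1\le r\le s$ and $n\ge s$. Start with the empty $s$-uniform multi-hypergraph $G_0^{(r,s)}$ on vertex set $[n]=\{1,\dots,n\}$. In each step $t\ge1$, a set $U_t$ of $r$ vertices is chosen uniformly at random among all $r$-subsets of $[n]$, independently of all previous choices; the player then chooses a set $V_t$ of $s-r$ vertices of $[n]\setminus U_t$ (when $r=s$, $V_t=\emptyset$), and the edge $U_t\cup V_t$ is added to $G^{(r,s)}_{t-1}$ to form $G^{(r,s)}_t$ (parallel edges are allowed). A strategy is, for each $n$, a sequence of functions $(f_t)_{t\ge1}$ with $V_t=f_t(U_1,V_1,\dots,U_{t-1},V_{t-1},U_t)$. An event holds a.a.s. if its probability tends to $1$ as $n\to\infty$; $a_n\gg b_n$ means $b_n=o(a_n)$. ''$G_t^{(r,s)}$ contains $H$'' means $G_t^{(r,s)}$ has a sub-hypergraph isomorphic to $H$. For a function $f(n)$: ''$\tau^{(r)}(H)\le f$'' means there is a strategy such that for every $t=t(n)\gg f(n)$, a.a.s. $G^{(r,s)}_t$ contains $H$; ''$\tau^{(r)}(H)\ge f$'' means for every strategy and every $t=t(n)=o(f(n))$,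 a.a.s. $G^{(r,s)}_t$ does not contain $H$; ''$\tau^{(r)}(H)=f$'' means both hold. *)

(* Defs.v *)
From Stdlib Require Import Reals.
From mathcomp Require Import all_boot.
Set Implicit Arguments. Unset Strict Implicit. Unset Printing Implicit Defensive.

(* A strategy: for each n, given the history ((U_1,V_1),...,(U_{t-1},V_{t-1}))
   and the new random r-set U_t, returns V_t.  (t = length of history + 1.) *)
Definition strategy := forall n : nat,
  seq ({set 'I_n} * {set 'I_n}) -> {set 'I_n} -> {set 'I_n}.

Definition valid_strategy (r s : nat) (S : strategy) : Prop :=
  forall n, s <= n -> forall h (u : {set 'I_n}), #|u| = r ->
    #|S n h u| = s - r /\ [disjoint u & S n h u].

Definition history (S : strategy) n (us : seq {set 'I_n}) :
  seq ({set 'I_n} * {set 'I_n}) :=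
  foldl (fun h u => rcons h (u, S n h u)) [::] us.

Definition edges_of (S : strategy) n (us : seq {set 'I_n}) : seq {set 'I_n} :=
  map (fun p => p.1 :|: p.2) (history S us).

Definition contains_copy k n (H : {set {set 'I_k}}) (G : seq {set 'I_n}) : bool :=
  [exists phi : {ffun 'I_k -> 'I_n},
     injectiveb phi && [forall e in H, (phi @: e) \in G]].

(* Probability (uniform over the independent choices of U_1..U_t among r-subsets)
   that G_t^{(r,s)} contains H. *)
Definition prob_contains (r : nat) (S : strategy) k (H : {set {set 'I_k}})
  (n t : nat) : R :=
  Rdiv (INR (#|[set w : t.-tuple {set 'I_n} |
           all (fun u : {set 'I_n} => #|u| == r) (val w) && contains_copy H (edges_of S (val w))]|))
   (INR ('C(n, r) ^ t)%nat).

Definition little_o (f g : nat -> R) : Prop :=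
  forall eps : R, Rlt 0 eps -> exists N : nat, forall n : nat, N <= n ->
    Rle (Rabs (f n)) (Rmult eps (Rabs (g n))).

(* tau^{(r)}(H) >= f : for every strategy and every t = o(f), a.a.s. G_t does
   not contain H, i.e. P(G_t contains H) -> 0. *)
Definition tau_ge (r s : nat) k (H : {set {set 'I_k}}) (f : nat -> R) : Prop :=
  forall S : strategy, valid_strategy r s S ->
  forall t : nat -> nat, little_o (fun n => INR (t n)) f ->
    Un_cv (fun n => prob_contains r S H n (t n)) (IZR 0).

(* Main.v *)
Require Import Defs.
From Stdlib Require Import Reals.
From mathcomp Require Import all_boot.
From Stdlib Require Import Lra.
Set Implicit Arguments. Unset Strict Implicit. Unset Printing Implicit Defensive.

Open Scope R_scope.

Lemma key (x : R) (r m k s : nat) : 0 < x -> (0 < m)%nat -> (s <= k)%nat ->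
  x ^ (k - s) * (Rpower x (INR r - (INR k - INR s + INR r) / INR m)) ^ m
  = x ^ (r * m.-1).
Proof.
move=> Hx Hm Hsk.
have Hf : 0 < Rpower x (INR r - (INR k - INR s + INR r) / INR m) by apply: exp_pos.
rewrite -(@Rpower_pow m _ Hf) Rpower_mult.
have HmR : INR m <> 0 by apply: not_0_INR; move=> E; rewrite E in Hm.
have E : (INR r - (INR k - INR s + INR r) / INR m) * INR m
   = INR (r * m.-1) + - INR (k - s).
  rewrite mult_INR minus_INR; last by apply/leP.
  have -> : INR m.-1 = INR m - 1.
    by clear -Hm; case: m Hm => // m' _; rewrite S_INR /=; ring.
  field; exact: HmR.
rewrite E Rpower_plus Rpower_Ropp !Rpower_pow //.
field; apply: pow_nonzero; lra.
Qed.



Lemma ring1 (K e1 C x1 fm : R) : K * e1 * C * (x1 * fm) = K * x1 * (e1 * fm) * C.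
Proof. ring. Qed.
Lemma field1 (c d : R) : 0 < d -> c / d * d = c.
Proof. move=> H; field; lra. Qed.
Lemma field2 (eps K : R) : 0 <= K -> (K + 1) * (eps / (2 * (K + 1))) = eps / 2.
Proof. move=> H; field; lra. Qed.
Close Scope R_scope.

From mathcomp Require Import zify ring.

Section Occ.
Variable T : eqType.

Fixpoint occr (g q : seq T) {struct g} : nat :=
  match q with
  | [::] => 1
  | y :: q' => match g with
               | [::] => 0
               | x :: g' => occr g' q + (x == y) * occr g' q'
               end
  end.

Definition occ (p G : seq T) := occr (rev G) (rev p).

Lemma occ_nil G : occ [::] G = 1.
Proof. by rewrite /occ; case: (rev G). Qed.

Lemma occ_rcons p y G x :
  occ (rcons p y) (rcons G x) = occ (rcons p y) G + (x == y) * occ p G.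
Proof. by rewrite /occ !rev_rcons. Qed.

Lemma occr_subseq g q : subseq q g -> 0 < occr g q.
Proof.
elim: g q => [|x g IH] [|y q] //=.
case: eqP => [-> | ne] H.
  by rewrite eqxx mul1n; have := IH _ H; rewrite addn_gt0 => ->; rewrite orbT.
by rewrite addn_gt0 IH.
Qed.

Lemma occ_subseq p G : subseq p G -> 0 < occ p G.
Proof. by move=> H; apply: occr_subseq; rewrite subseq_rev. Qed.
End Occ.

Section Proc.
Variables (n r : nat) (S : strategy).
Local Notation X := {set 'I_n}.

Definition Lr : seq X := enum [set u : X | #|u| == r].

Fixpoint Om (t : nat) : seq (seq X) :=
  if t is t'.+1 then [seq rcons w u | w <- Om t', u <- Lr] else [:: [::]].

Lemma size_Lr : size Lr = 'C(n, r).
Proof. by rewrite /Lr -cardE card_draws card_ord. Qed.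

Lemma size_Om t : size (Om t) = 'C(n, r) ^ t.
Proof. by elim: t => //= t IH; rewrite size_allpairs IH size_Lr expnSr. Qed.

Lemma uniq_Om t : uniq (Om t).
Proof.
elim: t => //= t IH; apply: allpairs_uniq => //; first exact: enum_uniq.
by move=> [a b] [c d] _ _ /= /rcons_inj [-> ->].
Qed.

Lemma mem_Om t w : (w \in Om t) = (size w == t) && all (fun u : X => #|u| == r) w.
Proof.
elim: t w => [|t IH] w /=.
  by rewrite inE; case: w.
apply/allpairsP/idP.
  move=> [[a b] /= [Ha Hb ->]]; move: Ha; rewrite IH => /andP [/eqP Hs Ha].
  by rewrite size_rcons Hs eqxx all_rcons Ha andbT; move: Hb; rewrite mem_enum inE.
case/lastP: w => [|w u]; first by [].
rewrite size_rcons all_rcons eqSS => /andP [Hs /andP [Hu Hw]].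
exists (w, u) => /=; split => //; first by rewrite IH Hs Hw.
by rewrite mem_enum inE.
Qed.

Definition Ed (w : seq X) (u : X) : X := u :|: @S n (history S w) u.

Lemma edges_rcons w u : edges_of S (rcons w u) = rcons (edges_of S w) (Ed w u).
Proof. by rewrite /edges_of /history foldl_rcons map_rcons. Qed.

Lemma card_tuple_Om t (P : pred (seq X)) :
  #|[set w : t.-tuple X | all (fun u : X => #|u| == r) (val w) && P (val w)]|
  = count P (Om t).
Proof.
rewrite cardE -(size_map val) -size_filter.
apply/perm_size/uniq_perm.
- by rewrite (map_inj_uniq val_inj) enum_uniq.
- by rewrite filter_uniq // uniq_Om.
move=> w; rewrite mem_filter mem_Om.
apply/mapP/idP.
  by move=> [x]; rewrite mem_enum inE => /andP [Ha Hp] ->; rewrite Hp size_tuple eqxx.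
move=> /andP [Hp /andP [Hs Ha]].
exists (Tuple Hs) => //; by rewrite mem_enum inE /= Ha Hp.
Qed.

End Proc.

Lemma foldr_muln_prod (s : seq nat) : foldr muln 1 s = \prod_(i <- s) i.
Proof. by elim: s => [|x s IH]; rewrite ?big_nil ?big_cons //= IH. Qed.

Lemma sum_const_seq (T : Type) (s : seq T) c : \sum_(i <- s) c = size s * c.
Proof. by rewrite -[c in LHS]mul1n -big_distrl /= sum1_size. Qed.

Section Count.
Variables (n r s k : nat) (S : strategy).
Local Notation X := {set 'I_n}.

Lemma first_step (e : {set 'I_k}) (E : X) : #|e| = s -> #|E| <= s ->
  \sum_(psi : {ffun 'I_k -> 'I_n}) ((psi @: e) == E) <= s ^ s * n ^ (k - s).
Proof.
move=> He HE.
pose F := fun x : 'I_k => if x \in e then mem E else mem [set: 'I_n].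
apply: (@leq_trans #|family F|).
  rewrite -sum1_card [in X in _ <= X]big_mkcond /=; apply: leq_sum => psi _.
  case: (psi @: e =P E) => //= Hpsi; rewrite lt0b; apply/familyP => x.
  rewrite /F; case: ifP => Hx; last by rewrite inE.
  by rewrite -Hpsi; apply: imset_f.
rewrite card_family foldr_muln_prod big_map big_enum /=.
apply: (@leq_trans (\prod_(x : 'I_k) (if x \in e then s else n))).
  apply: leq_prod => x _; rewrite /F; case: ifP => _ //.
  by rewrite cardsT card_ord.
rewrite (bigID (mem e)) /=.
rewrite (eq_bigr (fun _ => s)); last by move=> x ->.
rewrite [X in _ * X](eq_bigr (fun _ => n)); last by move=> x /negbTE ->.
rewrite !prod_nat_const.
have Hc : #|[pred x | ~~ (x \in e)]| = k - s.
  have := cardsC e; rewrite He => Hk; rewrite card_ord in Hk.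
  have -> : #|[pred x | ~~ (x \in e)]| = #|~: e| by apply: eq_card => x; rewrite !inE.
  lia.
by rewrite He -Hc.
Qed.


Variable es : seq {set 'I_k}.

Definition A j (w : seq X) : nat := \sum_(psi : {ffun 'I_k -> 'I_n})
  occ [seq psi @: e | e : {set 'I_k} <- take j es] (edges_of S w).
Definition B j t := \sum_(w <- Om n r t) A j w.

Lemma A_rcons j w u : j < size es -> A j.+1 (rcons w u) = A j.+1 w +
  \sum_(psi : {ffun 'I_k -> 'I_n}) (Ed S w u == psi @: nth set0 es j) *
     occ [seq psi @: e | e : {set 'I_k} <- take j es] (edges_of S w).
Proof.
move=> Hj; rewrite /A -big_split /=; apply: eq_bigr => psi _.
by rewrite (take_nth set0 Hj) map_rcons edges_rcons occ_rcons.
Qed.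

Lemma sub_count (P : X) w : #|P| <= k -> \sum_(u <- Lr n r) (Ed S w u == P) <= 2 ^ k.
Proof.
move=> HP; apply: (@leq_trans (\sum_(u : X) (u \subset P))).
  rewrite /Lr big_enum /= [X in _ <= X](bigID (mem [set u : X | #|u| == r])) /=.
  apply: leq_trans (leq_addr _ _); apply: leq_sum => u _.
  case: (Ed S w u =P P) => //= <-; rewrite lt0b; exact: subsetUl.
apply: (@leq_trans (2 ^ #|P|)); last by rewrite leq_exp2l.
rewrite -card_powerset -sum1_card [in X in _ <= X]big_mkcond /=.
by apply: leq_sum => u _; rewrite powersetE.
Qed.

Lemma B_step j t : j < size es -> B j.+1 t.+1 <= 'C(n, r) * B j.+1 t + 2 ^ k * B j t.
Proof.
move=> Hj; rewrite /B /= big_allpairs_dep /= big_distrr big_distrr -big_split /=.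
apply: leq_sum => w _.
under eq_bigr do rewrite A_rcons //.
rewrite big_split /= sum_const_seq size_Lr leq_add2l.
rewrite exchange_big /= /A big_distrr /=; apply: leq_sum => psi _.
rewrite -big_distrl /=; apply: leq_mul => //.
apply: sub_count; apply: leq_trans (leq_imset_card _ _) _.
by apply: leq_trans (max_card _) _; rewrite card_ord.
Qed.

Lemma card_Ed (w : seq X) (u : X) : valid_strategy r s S -> s <= n -> #|u| = r -> r <= s -> #|Ed S w u| <= s.
Proof.
move=> Hv Hn Hu Hrs; have [H1 _] := Hv n Hn (history S w) u Hu.
rewrite /Ed; apply: leq_trans (leq_card_setU _ _) _.
by rewrite Hu H1 subnKC.
Qed.

Lemma B_step0 t : 0 < size es -> #|nth set0 es 0| = s -> s <= n ->
  valid_strategy r s S -> r <= s ->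
  B 1 t.+1 <= 'C(n, r) * B 1 t + s ^ s * n ^ (k - s) * 'C(n, r) ^ t.+1.
Proof.
move=> H0 He Hn Hv Hrs.
have -> : s ^ s * n ^ (k - s) * 'C(n, r) ^ t.+1 =
    \sum_(w <- Om n r t) (s ^ s * n ^ (k - s) * 'C(n, r)).
  by rewrite sum_const_seq size_Om expnSr; ring.
rewrite /B /= big_allpairs_dep /= big_distrr -big_split /=.
apply: leq_sum => w Hw.
under eq_bigr do rewrite A_rcons //.
rewrite big_split /= sum_const_seq size_Lr leq_add2l [X in _ <= X]mulnC -size_Lr -sum_const_seq.
rewrite big_seq_cond [X in _ <= X]big_seq_cond; apply: leq_sum => u /andP [Hu _].
under eq_bigr do rewrite take0 /= occ_nil muln1.
under eq_bigr do rewrite eq_sym.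
apply: first_step => //; apply: card_Ed => //.
by move: Hu; rewrite mem_enum inE => /eqP.
Qed.

End Count.

Lemma pow_succ_le t a : t ^ a.+1 + t ^ a <= t.+1 ^ a.+1.
Proof.
rewrite expnS [X in _ <= X]expnS -{2}(mul1n (t ^ a)) -mulnDl addn1.
apply: leq_mul => //; elim: a => // a IH; rewrite !expnS; exact: leq_mul.
Qed.

Section Bound.
Variables (n r s k : nat) (S : strategy) (es : seq {set 'I_k}).
Hypotheses (Hes : #|nth set0 es 0| = s) (Hn : s <= n) (Hv : valid_strategy r s S) (Hrs : r <= s).
Local Notation C := ('C(n, r)).
Local Notation c1 := (s ^ s * n ^ (k - s)).

Lemma B_zero j : 0 < j <= size es -> B n r S es j 0 = 0.
Proof.
case: j => // j /andP [_ Hj].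
rewrite /B /= big_cons big_nil addn0 /A; apply: big1 => psi _.
by rewrite (take_nth set0 Hj) map_rcons /occ rev_rcons.
Qed.

Lemma B_bound i t : i < size es ->
  B n r S es i.+1 t * C ^ i <= c1 * 2 ^ (k * i) * t ^ i.+1 * C ^ t.
Proof.
elim: i t => [|i IHi] t Hi.
  elim: t => [|t IHt]; first by rewrite B_zero ?Hi.
  rewrite !muln0 !expn0 !muln1 in IHt *.
  apply: leq_trans (B_step0 t Hi Hes Hn Hv Hrs) _.
  apply: leq_trans (leq_add (leq_mul (leqnn C) IHt) (leqnn _)) _.
  rewrite !expn1 expnS; apply: eq_leq; ring.
have Hi' : i < size es by apply: ltnW.
elim: t => [|t IHt]; first by rewrite B_zero ?mul0n // Hi.
apply: leq_trans (leq_mul (B_step n r S t Hi) (leqnn (C ^ i.+1))) _.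
have E1 : ('C(n, r) * B n r S es i.+2 t + 2 ^ k * B n r S es i.+1 t) * C ^ i.+1
  = C * (B n r S es i.+2 t * C ^ i.+1) + 2 ^ k * C * (B n r S es i.+1 t * C ^ i).
  rewrite expnS; ring.
rewrite E1.
apply: leq_trans (leq_add (leq_mul (leqnn C) IHt) (leq_mul (leqnn _) (IHi t Hi'))) _.
apply: (@leq_trans (c1 * 2 ^ (k * i.+1) * C ^ t.+1 * (t ^ i.+2 + t ^ i.+1))).
  rewrite mulnS expnD !expnS; apply: eq_leq; ring.
rewrite [X in _ <= X]mulnAC; apply: leq_mul => //; exact: pow_succ_le.
Qed.

End Bound.

Lemma preim_im k n (phi : {ffun 'I_k -> 'I_n}) (e : {set 'I_k}) :
  injective phi -> phi @^-1: (phi @: e) = e.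
Proof. by move=> Hi; apply/setP => x; rewrite inE mem_imset. Qed.

Lemma copy_es k n m (H : {set {set 'I_k}}) (G : seq {set 'I_n}) :
  #|H| = m -> contains_copy H G ->
  exists es : m.-tuple {set 'I_k}, all (mem H) es /\
    exists phi : {ffun 'I_k -> 'I_n}, subseq [seq phi @: e | e : {set 'I_k} <- es] G.
Proof.
move=> Hm /existsP [phi /andP [/injectiveP Hinj /forall_inP HG]].
pose L := [seq phi @: e | e : {set 'I_k} <- enum H].
pose p := [seq x <- undup G | x \in L].
pose es0 := [seq phi @^-1: x | x : {set 'I_n} <- p].
have HL x : x \in L -> exists2 e, e \in H & x = phi @: e.
  by move/mapP => [e]; rewrite mem_enum => He ->; exists e.
have Hmap : [seq phi @: e | e : {set 'I_k} <- es0] = p.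
  rewrite -map_comp; apply: map_id_in => x.
  rewrite mem_filter => /andP [/HL [e _ ->] _] /=.
  by rewrite preim_im.
have Hall : all (mem H) es0.
  apply/allP => y /mapP [x]; rewrite mem_filter => /andP [/HL [e He ->] _] ->.
  by rewrite preim_im.
have Hsize : size es0 == m.
  rewrite size_map -Hm cardE -(size_map (fun e : {set 'I_k} => phi @: e)).
  apply/eqP/perm_size/uniq_perm.
  - by rewrite filter_uniq // undup_uniq.
  - rewrite map_inj_in_uniq ?enum_uniq //.
    by move=> a b _ _; apply: imset_inj.
  move=> x; rewrite mem_filter mem_undup; apply/andP/idP => [[]//|Hx].
  split => //; have [e He ->] := HL x Hx; exact: HG.
exists (Tuple Hsize); split => //; exists phi => /=.
rewrite Hmap; apply: subseq_trans (filter_subseq _ _) (undup_subseq _).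
Qed.

Section Final.
Variables (n r s k m : nat) (S : strategy) (H : {set {set 'I_k}}).
Hypotheses (Hn : s <= n) (Hv : valid_strategy r s S) (Hrs : r <= s)
  (HH : forall e, e \in H -> #|e| = s) (Hm : #|H| = m) (Hm0 : 0 < m).

Lemma count_bound t :
  count (fun w => contains_copy H (edges_of S w)) (Om n r t) * 'C(n, r) ^ m.-1
   <= #|{: m.-tuple {set 'I_k}}| * (s ^ s * n ^ (k - s) * 2 ^ (k * m.-1) * t ^ m * 'C(n, r) ^ t).
Proof.
rewrite -sum1_count.
apply: (@leq_trans ((\sum_(w <- Om n r t) \sum_(es : m.-tuple {set 'I_k} | all (mem H) es)
   A S es m w) * 'C(n, r) ^ m.-1)).
  rewrite leq_mul2r; apply/orP; right.
  rewrite big_mkcond /=; apply: leq_sum => w _; case: ifP => // HP.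
  have [es [Hes [phi Hsub]]] := copy_es Hm HP.
  rewrite (bigD1 es) //=; apply: leq_trans (leq_addr _ _).
  rewrite /A (bigD1 phi) //=; apply: leq_trans (leq_addr _ _).
  by rewrite take_oversize ?size_tuple //; apply: occ_subseq.
rewrite exchange_big /= big_distrl /=.
rewrite -sum_nat_const big_mkcond /=; apply: leq_sum => es _.
case: ifP => // Hes.
have Hm1 : m.-1 < size es by rewrite size_tuple prednK.
have H0 : #|nth set0 es 0| = s.
  apply: HH; apply: (allP Hes); apply: mem_nth; rewrite size_tuple //.
have := B_bound H0 Hn Hv Hrs t Hm1.
by rewrite prednK.
Qed.
End Final.

Lemma leq_expr a b e : a <= b -> a ^ e <= b ^ e.
Proof. by move=> H; elim: e => // e IH; rewrite !expnS leq_mul. Qed.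

Lemma ffact_lb r n : 2 * r <= n -> n ^ r <= 2 ^ r * n ^_ r.
Proof.
elim: r => [|r IH] Hr; first by rewrite ffactn0.
have Hr' : 2 * r <= n by apply: leq_trans Hr; rewrite leq_mul2l ltnW.
rewrite ffactnSr expnSr [2 ^ r.+1]expnS.
have -> : 2 * 2 ^ r * (n ^_ r * (n - r)) = (2 ^ r * n ^_ r) * (2 * (n - r)) by ring.
apply: leq_mul; first exact: IH.
lia.
Qed.

Lemma binom_lb r n : 2 * r <= n -> n ^ r <= 2 ^ r * r`! * 'C(n, r).
Proof. by move=> H; rewrite -mulnA [r`! * _]mulnC bin_ffact; apply: ffact_lb. Qed.

Lemma nat_main n r s k m t (S : strategy) (H : {set {set 'I_k}}) :
  s <= n -> 2 * r <= n -> valid_strategy r s S -> r <= s ->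
  (forall e, e \in H -> #|e| = s) -> #|H| = m -> 0 < m ->
  count (fun w => contains_copy H (edges_of S w)) (Om n r t) * n ^ (r * m.-1)
   <= (#|{: m.-tuple {set 'I_k}}| * s ^ s * 2 ^ (k * m.-1) * (2 ^ r * r`!) ^ m.-1)
      * n ^ (k - s) * t ^ m * 'C(n, r) ^ t.
Proof.
move=> Hn H2 Hv Hrs HH Hm Hm0.
have := count_bound Hn Hv Hrs HH Hm Hm0 t.
set c := count _ _ => Hc.
apply: (@leq_trans (c * ((2 ^ r * r`!) ^ m.-1 * 'C(n, r) ^ m.-1))).
  rewrite leq_mul2l; apply/orP; right.
  rewrite -expnMn expnM; apply: leq_expr; exact: binom_lb.
apply: (@leq_trans ((2 ^ r * r`!) ^ m.-1 * (#|{: m.-tuple {set 'I_k}}| * (s ^ s * n ^ (k - s) * 2 ^ (k * m.-1) * t ^ m * 'C(n, r) ^ t)))).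
  rewrite mulnA [c * _]mulnC -mulnA; exact: leq_mul.
by apply: eq_leq; ring.
Qed.

Open Scope R_scope.
Lemma INR_muln (a b : nat) : INR (a * b)%N = INR a * INR b.
Proof. by rewrite mulnE mult_INR. Qed.

Lemma INR_expn (a b : nat) : INR (a ^ b)%N = INR a ^ b.
Proof. by elim: b => [|b IH] //; rewrite expnS INR_muln IH. Qed.

Lemma pow_le_self (e : R) (m : nat) : 0 <= e <= 1 -> e ^ m.+1 <= e.
Proof.
move=> He; elim: m => [|m IH]; first by rewrite /=; lra.
rewrite /= in IH *; nra.
Qed.

Lemma main_aux (k s r m : nat) (H : {set {set 'I_k}}) :
  (1 <= r)%N -> (r <= s)%N -> (s <= k)%N ->
  (forall e, e \in H -> #|e| = s) ->
  #|H| = m -> (1 <= m)%N ->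
  tau_ge r s H
    (fun n => Rpower (INR n) (Rminus (INR r) (Rdiv (Rplus (Rminus (INR k) (INR s)) (INR r)) (INR m)))).
Proof.
move=> Hr Hrs Hsk HH Hm Hm0 S Hv t Ho eps Heps.
set Kn := (#|{: m.-tuple {set 'I_k}}| * s ^ s * 2 ^ (k * m.-1) * (2 ^ r * r`!) ^ m.-1)%nat.
set K := INR Kn.
have HK : (0 <= K) by apply: pos_INR.
set e1 := Rmin 1 (eps / (2 * (K + 1))).
have He1 : (0 < e1).
  apply: Rmin_pos; first lra.
  apply: Rdiv_lt_0_compat; lra.
have He1' : (e1 <= 1) by apply: Rmin_l.
have He1'' : (e1 <= eps / (2 * (K + 1))) by apply: Rmin_r.
have [N HN] := Ho e1 He1.
exists (N + s + 2 * r + 1)%nat => n Hn.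
have Hn' : (N + s + 2 * r + 1 <= n)%N by apply/leP.
have HNn : (N <= n)%N by lia.
have Hsn : (s <= n)%N by lia.
have H2r : (2 * r <= n)%N by lia.
have Hn0 : (0 < n)%N by lia.
have Hb := nat_main (t n) Hsn H2r Hv Hrs HH Hm Hm0.
rewrite -/Kn in Hb; clearbody Kn.
move/leP/le_INR: Hb; rewrite !INR_muln !INR_expn => Hb.
rewrite /prob_contains (@card_tuple_Om n r (t n) (fun w => contains_copy H (edges_of S w))) INR_expn.
set c := INR (count _ _) in Hb *.
set CR := INR 'C(n, r) in Hb *.
set x := INR n in Hb *.
have HN' := HN n HNn.
rewrite -/x in HN'.
set f := Rpower x _ in HN'.
have Hx : (0 < x) by apply: lt_0_INR; apply/ltP.
have Hf : (0 < f) by apply: exp_pos.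
have HCR : (0 < CR) by apply: lt_0_INR; apply/ltP; rewrite bin_gt0; lia.
have Hc : (0 <= c) by apply: pos_INR.
set tn := INR (t n) in Hb HN'.
have Htn : (0 <= tn) by apply: pos_INR.
rewrite Rabs_pos_eq // Rabs_pos_eq in HN'; last lra.
have Htm : (tn ^ m <= e1 * f ^ m).
  apply: Rle_trans (pow_incr _ _ m (conj Htn HN')) _.
  rewrite Rpow_mult_distr; apply: Rmult_le_compat_r; first by apply: pow_le; lra.
  by case: (m) Hm0 => // m' _; apply: pow_le_self; lra.
have Hkey := key r Hx Hm0 Hsk.
fold f in Hkey.
have HX : (0 < x ^ (r * m.-1)) by apply: pow_lt.
have Hxk : (0 <= x ^ (k - s)) by apply: pow_le; lra.
have HCt : (0 < CR ^ t n) by apply: pow_lt.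
have H1 : (c * x ^ (r * m.-1) <= (K * e1 * CR ^ t n) * x ^ (r * m.-1)).
  apply: Rle_trans Hb _.
  rewrite -Hkey.
  rewrite ring1.
  apply: Rmult_le_compat_r; first lra.
  apply: Rmult_le_compat_l => //; apply: Rmult_le_pos => //.
have H2 : (c <= K * e1 * CR ^ t n) by apply: Rmult_le_reg_r H1.
have H3 : (c / CR ^ t n <= K * e1).
  apply: (Rmult_le_reg_r (CR ^ t n)) => //.
  by rewrite field1.
have H4 : (0 <= c / CR ^ t n) by apply: Rmult_le_pos => //; apply: Rlt_le; apply: Rinv_0_lt_compat.
rewrite /Rdist Rminus_0_r Rabs_pos_eq //.
have H5 : (K * e1 <= (K + 1) * (eps / (2 * (K + 1)))).
  apply: Rle_trans (_ : ((K + 1) * e1 <= _)); first nra.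
  apply: Rmult_le_compat_l; lra.
have H6 := field2 eps HK.
lra.
Qed.

Close Scope R_scope.

Theorem theorem2 (k s r m : nat) (H : {set {set 'I_k}}) :
  1 <= r -> r <= s -> s <= k ->
  (forall e, e \in H -> #|e| = s) ->
  #|H| = m -> 1 <= m ->
  tau_ge r s H
    (fun n => Rpower (INR n) (Rminus (INR r) (Rdiv (Rplus (Rminus (INR k) (INR s)) (INR r)) (INR m)))).
Proof. exact: main_aux. Qed.
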